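(* Let $A\subseteq B\subseteq C$ be convex sets in $\mathbb{R}^d$. Then: (i) $\operatorname{rdist}(A,B)=\inf\{\lambda\geq 0: B\subseteq(1+\lambda)A-\lambda A\}$; (ii) for any affine map $\pi:\mathbb{R}^d\to\mathbb{R}^m$, $\operatorname{rdist}(\pi(A),\pi(B))\leq\operatorname{rdist}(A,B)$, with equality if $m=d$ and $\pi$ is invertible; (iii) $\operatorname{rdist}(A,C)\leq\operatorname{rdist}(A,B)+\operatorname{rdist}(B,C)+2\operatorname{rdist}(A,B)\operatorname{rdist}(B,C)$; (iv) for convex sets $A_1,\dots,A_t,B_1,\dots,B_t\subseteq\mathbb{R}^d$ with $A_i\subseteq B_i$ for all $i\in[t]$, $\operatorname{rdist}\big(\operatorname{conv}(\bigcup_{i\in[t]}A_i),\operatorname{conv}(\bigcup_{i\in[t]}B_i)\big)\leq\max_{i\in[t]}\operatorname{rdist}(A_i,B_i)$.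
   Context: For nonempty convex sets $A\subseteq B\subseteq\mathbb{R}^d$, $\operatorname{rdist}(A,B)=\sup_{\pi}\frac{\sup_{b\in B}\inf_{a\in A}|\pi(b)-\pi(a)|}{\sup_{a,a'\in A}|\pi(a)-\pi(a')|}$, the supremum over all linear maps $\pi:\mathbb{R}^d\to\mathbb{R}$, where a fraction with denominator $\infty$ and the fraction $0/0$ are interpreted as $0$; moreover $\operatorname{rdist}(\emptyset,\emptyset)=0$ and $\operatorname{rdist}(\emptyset,B)=\infty$ for $B\neq\emptyset$. For sets $X,Y$ and scalars $\alpha,\beta$, $\alpha X-\beta Y=\{\alpha x-\beta y: x\in X, y\in Y\}$. *)

(* Defs.v *)
From HB Require Import structures.
From mathcomp Require Import all_boot all_order all_algebra.
From mathcomp Require Import all_classical all_reals all_analysis.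
Set Implicit Arguments. Unset Strict Implicit. Unset Printing Implicit Defensive.
Import Order.TTheory GRing.Theory Num.Theory.
Local Open Scope classical_set_scope.
Local Open Scope ring_scope.

Section Defs.
Variable R : realType.

Definition cvx {d : nat} (A : set 'rV[R]_d) : Prop :=
  convex_set (A : set (convex_lmodType 'rV[R]_d)).

Definition chull {d : nat} (X : set 'rV[R]_d) : set 'rV[R]_d :=
  \bigcap_(K in [set K : set 'rV[R]_d | cvx K /\ X `<=` K]) K.

Definition is_linear_map (U V : lmodType R) (f : U -> V) : Prop :=
  forall (a : R) (x y : U), f (a *: x + y) = a *: f x + f y.

Definition is_affine_map {d m : nat} (f : 'rV[R]_d -> 'rV[R]_m) : Prop :=
  exists b : 'rV[R]_m, is_linear_map (fun x : 'rV[R]_d => f x - b).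

Definition rd_num {d : nat} (pi : 'rV[R]_d -> R^o) (A B : set 'rV[R]_d) : \bar R :=
  ereal_sup [set ereal_inf [set (`|pi b - pi a|)%:E | a in A] | b in B].

Definition rd_den {d : nat} (pi : 'rV[R]_d -> R^o) (A : set 'rV[R]_d) : \bar R :=
  ereal_sup [set (`|pi a - pi a'|)%:E | a in A & a' in A].

(* fraction N / D with conventions  N/oo = 0,  0/0 = 0 (and N/0 = +oo for N > 0) *)
Definition rd_frac (N D : \bar R) : \bar R :=
  if D == +oo%E then 0%E
  else if D == 0%E then (if N == 0%E then 0%E else +oo%E)
  else (N * ((fine D)^-1)%:E)%E.

Definition rdist {d : nat} (A B : set 'rV[R]_d) : \bar R :=
  if asbool (A = set0) then (if asbool (B = set0) then 0%E else +oo%E)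
  else ereal_sup [set rd_frac (rd_num pi A B) (rd_den pi A)
                 | pi in [set pi : 'rV[R]_d -> R^o | is_linear_map pi]].

Definition mink {d : nat} (alpha beta : R) (X Y : set 'rV[R]_d) : set 'rV[R]_d :=
  [set alpha *: x - beta *: y | x in X & y in Y].

End Defs.

(* Main.v *)
Require Import Defs.
From HB Require Import structures.
From mathcomp Require Import all_boot all_order all_algebra.
From mathcomp Require Import all_classical all_reals all_analysis.
From mathcomp Require Import lra ring.
Import Order.TTheory GRing.Theory Num.Theory.
Local Open Scope classical_set_scope.
Local Open Scope ring_scope.
Set Implicit Arguments. Unset Strict Implicit.

Section Sep.
Context {R : realType}.

Definition lin {n} (f : 'rV[R]_n -> R) :=
  forall a x y, f (a *: x + y) = a * f x + f y.

Lemma lin0 n (f : 'rV[R]_n -> R) : lin f -> f 0 = 0.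
Proof.
move=> hf; have := hf 1 0 0; rewrite scale1r addr0 mul1r => h.
lra.
Qed.

Lemma linD n (f : 'rV[R]_n -> R) x y : lin f -> f (x + y) = f x + f y.
Proof. by move=> hf; rewrite -[x in LHS]scale1r hf mul1r. Qed.

Lemma linZ n (f : 'rV[R]_n -> R) a x : lin f -> f (a *: x) = a * f x.
Proof. by move=> hf; by rewrite -(addr0 (a *: x)) hf (lin0 hf) addr0. Qed.

Lemma linB n (f : 'rV[R]_n -> R) x y : lin f -> f (x - y) = f x - f y.
Proof.
move=> hf; rewrite linD // -scaleN1r linZ //; lra.
Qed.

Definition pt {n} (t : R) (y : 'rV[R]_n) : 'rV[R]_(1 + n) :=
  row_mx (t%:M : 'rV[R]_1) y.

Lemma ptD n t t' (y y' : 'rV[R]_n) : pt t y + pt t' y' = pt (t + t') (y + y').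
Proof. by rewrite /pt add_row_mx raddfD. Qed.

Lemma ptZ n a t (y : 'rV[R]_n) : a *: pt t y = pt (a * t) (a *: y).
Proof. by rewrite /pt scale_row_mx scale_scalar_mx. Qed.

Lemma pt0 n : pt 0 (0 : 'rV[R]_n) = 0.
Proof. by rewrite /pt raddf0 row_mx0. Qed.

Lemma ptE n (x : 'rV[R]_(1 + n)) : x = pt (lsubmx x 0 0) (rsubmx x).
Proof. by rewrite /pt -mx11_scalar hsubmxK. Qed.

Lemma ptl n t (y : 'rV[R]_n) : lsubmx (pt t y) 0 0 = t.
Proof. by rewrite /pt row_mxKl mxE eqxx mulr1n. Qed.

Lemma ptr n t (y : 'rV[R]_n) : rsubmx (pt t y) = y.
Proof. by rewrite /pt row_mxKr. Qed.


Lemma lin_cst0 n : lin (fun _ : 'rV[R]_n => 0 : R).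
Proof. by move=> a x y; rewrite mulr0 addr0. Qed.

Lemma sep_cone n (K : set 'rV[R]_n) :
  (forall x y, K x -> K y -> K (x + y)) ->
  (forall s x, 0 < s -> K x -> K (s *: x)) -> ~ K 0 ->
  exists f : 'rV[R]_n -> R, lin f /\ (forall x, K x -> 0 <= f x) /\
     (forall x, K x -> exists2 z, K z & 0 < f z).
Proof.
elim: n K => [|n IH] K Kadd Kscal K0.
  exists (fun _ => 0); split; first exact: lin_cst0.
  by split => x Kx; exfalso; apply: K0; rewrite -(thinmx0 x).
pose Q := [set y : 'rV[R]_n | K (pt 0 y)].
have [g [glin [gpos gpr]]] : exists g : 'rV[R]_n -> R, lin g /\ (forall x, Q x -> 0 <= g x) /\
     (forall x, Q x -> exists2 z, Q z & 0 < g z).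
  apply: IH.
  - move=> y y' Qy Qy'; rewrite /Q /=.
    have -> : pt 0 (y + y') = pt 0 y + pt 0 y' by rewrite ptD addr0.
    exact: Kadd.
  - move=> s y s0 Qy; rewrite /Q /=.
    have -> : pt 0 (s *: y) = s *: pt 0 y by rewrite ptZ mulr0.
    exact: Kscal.
  - by rewrite /Q /= pt0.
have Kneg : forall t y, K (pt t y) -> t < 0 -> K (pt (-1) ((-t)^-1 *: y)).
  move=> t y Kt t0.
  have -> : pt (-1) ((-t)^-1 *: y) = (-t)^-1 *: pt t y.
    rewrite ptZ; congr pt; rewrite invrN mulNr mulVf ?lt_eqF //.
  by apply: Kscal => //; rewrite invr_gt0 oppr_gt0.
have Kpos : forall t y, K (pt t y) -> 0 < t -> K (pt 1 (t^-1 *: y)).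
  move=> t y Kt t0.
  have -> : pt 1 (t^-1 *: y) = t^-1 *: pt t y.
    by rewrite ptZ; congr pt; rewrite mulVf ?gt_eqF.
  by apply: Kscal => //; rewrite invr_gt0.
have [c [h [hlin [hpos hpr]]]] : exists c (h : 'rV[R]_n -> R), lin h /\
    (forall t y, K (pt t y) -> 0 <= c * t + h y) /\
    (forall t y, K (pt t y) -> exists t', exists2 y', K (pt t' y') & 0 < c * t' + h y').
  have [[w0 Kw0]|nW] := pselect (exists w, K (pt (-1) w));
  have [[u0 Ku0]|nU] := pselect (exists u, K (pt 1 u)).
  - pose S := [set - g u | u in [set u | K (pt 1 u)]].
    have WU : forall w u, K (pt (-1) w) -> K (pt 1 u) -> Q (w + u).
      move=> w u Kw Ku; rewrite /Q /=.
      have -> : pt 0 (w + u) = pt (-1) w + pt 1 u by rewrite ptD addNr.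
      exact: Kadd.
    have Sub : forall w, K (pt (-1) w) -> ubound S (g w).
      move=> w Kw _ [u Ku <-]; have := gpos _ (WU _ _ Kw Ku).
      rewrite linD //; lra.
    have Sne : S !=set0 by exists (- g u0), u0.
    exists (sup S), g; split => //; split.
    + move=> t y Kt; case: (ltgtP t 0) => [t0|t0|t0].
      * have := ge_sup Sne (Sub _ (Kneg _ _ Kt t0)).
        rewrite linZ // mulrC ler_pdivlMr ?oppr_gt0 //; lra.
      * have := ub_le_sup (ex_intro _ _ (Sub _ Kw0)) (ex_intro2 _ _ _ (Kpos _ _ Kt t0) erefl).
        rewrite linZ // mulrC -mulNr ler_pdivrMr //; lra.
      * by rewrite t0 mulr0 add0r; apply: gpos; rewrite /Q /= -t0.
    + move=> _ _ _; have [q Qq gq] := gpr _ (WU _ _ Kw0 Ku0).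
      by exists 0, q => //; rewrite mulr0 add0r.
  - exists (-1), (fun _ => 0); split; first exact: lin_cst0; split.
    + move=> t y Kt; rewrite addr0 mulN1r oppr_ge0; rewrite leNgt; apply/negP => t0.
      by apply: nU; exists (t^-1 *: y); apply: Kpos.
    + by move=> _ _ _; exists (-1), w0 => //; rewrite addr0 mulN1r opprK.
  - exists 1, (fun _ => 0); split; first exact: lin_cst0; split.
    + move=> t y Kt; rewrite addr0 mul1r leNgt; apply/negP => t0.
      by apply: nW; exists ((-t)^-1 *: y); apply: Kneg.
    + by move=> _ _ _; exists 1, u0 => //; rewrite addr0 mul1r.
  - have t0 : forall t y, K (pt t y) -> t = 0.
      move=> t y Kt; case: (ltgtP t 0) => [tt|tt|//]; exfalso.
      + by apply: nW; exists ((-t)^-1 *: y); apply: Kneg.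
      + by apply: nU; exists (t^-1 *: y); apply: Kpos.
    exists 0, g; split => //; split.
    + move=> t y Kt; rewrite mul0r add0r; apply: gpos.
      by rewrite /Q /= -(t0 _ _ Kt).
    + move=> t y Kt; have Qy : Q y by rewrite /Q /= -(t0 _ _ Kt).
      have [q Qq gq] := gpr y Qy.
      by exists 0, q; rewrite ?mul0r ?add0r.
exists (fun x : 'rV[R]_(1 + n) => c * lsubmx x 0 0 + h (rsubmx x)); split; [|split].
- move=> a x y /=; rewrite linearD linearZ /= !mxE linearD linearZ /= linD // linZ //.
  set u := x 0 _; set v := y 0 _; set p := h _; set q := h _.
  rewrite mulrDr mulrDr !mulrA [c * a]mulrC; rewrite -!addrA; congr (_ + _).
  by rewrite addrCA.
- by move=> x; rewrite [in K x](ptE x) => /hpos.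
- move=> x; rewrite [in K x](ptE x) => /hpr [t' [y' Ky' hy']].
  by exists (pt t' y') => //; rewrite ptl ptr.
Qed.

End Sep.

Section S2.
Context {R : realType}.

Lemma cvxP d (A : set 'rV[R]_d) : cvx A <->
  (forall x y t, 0 <= t -> t <= 1 -> A x -> A y -> A (t *: x + (1 - t) *: y)).
Proof.
split.
- move=> hA x y t t0 t1 Ax Ay.
  have tP : Itv.spec (@Itv.num_sem R) (Itv.Real `[0, 1]%Z) t.
    by rewrite /= /Itv.num_sem /= in_itv /= t0 t1 andbT num_real.
  have := hA x y (@Itv.Def R (@Itv.num_sem R) (Itv.Real `[0, 1]%Z) t tP).
  by rewrite !in_setE => /(_ Ax Ay).
- move=> h x y l; rewrite !in_setE => Ax Ay.
  exact: (h x y l%:num (ge0 l) (le1 l) Ax Ay).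
Qed.


Lemma sep_pt d (S : set 'rV[R]_d) b s1 : cvx S -> ~ S b -> S s1 ->
  exists f : 'rV[R]_d -> R, lin f /\ (forall s, S s -> f s <= f b) /\
    exists2 s0, S s0 & f s0 < f b.
Proof.
move=> /cvxP cS nSb Ss1.
pose K := [set x : 'rV[R]_d | exists t s, [/\ 0 < t, S s & x = t *: (b - s)]].
have Kadd : forall x y, K x -> K y -> K (x + y).
  move=> _ _ [t1 [u1 [t10 Su1 ->]]] [t2 [u2 [t20 Su2 ->]]].
  have tt : 0 < t1 + t2 by lra.
  exists (t1 + t2), ((t1 / (t1 + t2)) *: u1 + (1 - t1 / (t1 + t2)) *: u2); split => //.
    apply: cS => //; first by rewrite divr_ge0 // ltW.
    by rewrite ler_pdivrMr // mul1r lerDl ltW.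
  have e1 : (t1 + t2) * (t1 / (t1 + t2)) = t1 by field; rewrite gt_eqF.
  have e2 : (t1 + t2) * (1 - t1 / (t1 + t2)) = t2 by field; rewrite gt_eqF.
  rewrite !scalerBr !scalerDr !scalerA e1 e2 scalerDl.
  by rewrite opprD addrACA.
have Kscal : forall s x, 0 < s -> K x -> K (s *: x).
  move=> s _ s0 [t [u [t0 Su ->]]]; exists (s * t), u; split => //.
    exact: mulr_gt0.
  by rewrite scalerA.
have K0 : ~ K 0.
  move=> [t [u [t0 Su]]] /esym /eqP; rewrite scaler_eq0 gt_eqF //= subr_eq0 => /eqP bu.
  by apply: nSb; rewrite bu.
have [f [flin [fpos fpr]]] := @sep_cone R d K Kadd Kscal K0.
exists f; split => //; split.
- move=> s Ss; have := fpos (1 *: (b - s)) (ex_intro _ 1 (ex_intro _ s (And3 ltr01 Ss erefl))).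
  rewrite scale1r linB //; lra.
- have [z [t [u [t0 Su ->]]] fz] := fpr _ (ex_intro _ 1 (ex_intro _ s1 (And3 ltr01 Ss1 erefl))).
  exists u => //; move: fz; rewrite linZ // linB // pmulr_rgt0 //; lra.
Qed.

End S2.

Section S3.
Context {R : realType}.

Lemma set0_or {T : Type} (A : set T) : A = set0 \/ exists a, A a.
Proof.
have [h|h] := pselect (exists a, A a); [by right|left].
by apply/seteqP; split => // x Ax; apply: h; exists x.
Qed.

Lemma my_le_approx (y z : \bar R) : (forall x : R, (y < x%:E)%E -> (z <= x%:E)%E) -> (z <= y)%E.
Proof.
case: y => [r| |] h.
- apply/lee_addgt0Pr => e e0; rewrite -EFinD; apply: h; rewrite lte_fin; lra.
- exact: leey.
- case: z h => [r'| |] h //.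
  + move: (h (r' - 1)%R (ltNyr _)); rewrite lee_fin => H; exfalso; lra.
  + by have := h 0 (ltNyr _).
Qed.

Lemma lin_isl d (f : 'rV[R]_d -> R^o) : is_linear_map f <-> lin f.
Proof. by []. Qed.

Lemma rdistE d (A B : set 'rV[R]_d) : A !=set0 ->
  rdist A B = ereal_sup [set rd_frac (rd_num pi A B) (rd_den pi A)
                 | pi in [set pi : 'rV[R]_d -> R^o | is_linear_map pi]].
Proof.
by move=> [a Aa]; rewrite /rdist asboolF // => A0; rewrite A0 in Aa.
Qed.

Lemma rdist0E d (A B : set 'rV[R]_d) : A = set0 ->
  rdist A B = if asbool (B = set0) then 0%E else +oo%E.
Proof. by move=> ->; rewrite /rdist asboolT. Qed.

Lemma rdist_ge0 d (A B : set 'rV[R]_d) : (0 <= rdist A B)%E.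
Proof.
have [A0|[a Aa]] := set0_or A.
  by rewrite rdist0E //; case: asboolP => _; rewrite ?lexx ?leey.
rewrite rdistE; last by exists a.
apply: le_trans (ereal_sup_ubound _); last first.
  exists (fun _ => 0 : R^o) => //; exact: lin_cst0.
have -> : rd_den (fun _ => 0 : R^o) A = 0%E.
  apply/eqP; rewrite eq_le; apply/andP; split.
    by apply: ge_ereal_sup => _ [x _ [y _ <-]]; rewrite subrr normr0.
  by apply: ereal_sup_ubound; exists a => //; exists a => //; rewrite subrr normr0.
rewrite /rd_frac; case: ifP => // H; first by case: ifP.
by move/negbT/eqP: H.

Qed.


Lemma rdist_le_easy d (A B : set 'rV[R]_d) (l : R) a0 : A a0 -> A `<=` B -> 0 <= l ->
  B `<=` mink (1 + l) l A A -> (rdist A B <= l%:E)%E.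
Proof.
move=> Aa0 AB l0 BS; rewrite rdistE; last by exists a0.
apply: ge_ereal_sup => _ [pi /lin_isl pil <-].
have D0 : (0 <= rd_den pi A)%E.
  apply: le_trans (ereal_sup_ubound _); last by exists a0 => //; exists a0.
  by rewrite lee_fin.
have N0 : (0 <= rd_num pi A B)%E.
  apply: le_trans (ereal_sup_ubound _); last by exists a0; first exact: AB.
  by apply: le_ereal_inf_tmp => _ [a _ <-]; rewrite lee_fin.
have ND : (rd_num pi A B <= l%:E * rd_den pi A)%E.
  apply: ge_ereal_sup => _ [b Bb <-].
  have [a1 Aa1 [a2 Aa2 eb]] := BS _ Bb.
  apply: (@le_trans _ _ (`|pi b - pi a1|%:E)).
    by apply: ereal_inf_lbound; exists a1.
  have -> : pi b - pi a1 = l * (pi a1 - pi a2).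
    by rewrite -eb linB // !linZ //; ring.
  rewrite normrM ger0_norm // EFinM; apply: lee_wpmul2l; first by rewrite lee_fin.
  by apply: ereal_sup_ubound; exists a1 => //; exists a2.
move: (rd_num pi A B) (rd_den pi A) N0 D0 ND => N D N0 D0 ND.
rewrite /rd_frac; case: ifP => [_|/negbT Dy]; first by rewrite lee_fin.
case: ifP => [/eqP D0'|/negbT Dn0].
  have -> : N = 0%E by apply/le_anti; rewrite N0 andbT; move: ND; rewrite D0' mule0.
  by rewrite eqxx lee_fin.
move: D0 Dy Dn0 ND; case: D => [D'| |] //= D0 _ Dn0 ND.
have D'0 : 0 < D' by rewrite lt_def; rewrite lee_fin in D0; rewrite D0 andbT; 
  apply: contraNneq Dn0 => ->.
apply: le_trans (lee_wpmul2r _ ND) _; first by rewrite lee_fin invr_ge0 ltW.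
by rewrite -EFinM mulrK ?unitfE ?gt_eqF.
Qed.


Lemma mink_cvx d (A : set 'rV[R]_d) l : cvx A -> cvx (mink (1 + l) l A A).
Proof.
move=> /cvxP cA; apply/cvxP => _ _ t t0 t1 [a1 A1 [a2 A2 <-]] [a3 A3 [a4 A4 <-]].
exists (t *: a1 + (1 - t) *: a3); first exact: cA.
exists (t *: a2 + (1 - t) *: a4); first exact: cA.
apply/rowP => i; rewrite !mxE; ring.
Qed.

Lemma rdist_hard d (A B : set 'rV[R]_d) (l : R) a0 : A a0 -> cvx A ->
  (rdist A B < l%:E)%E -> B `<=` mink (1 + l) l A A.
Proof.
move=> Aa0 cA rl b Bb.
have l0 : 0 < l by rewrite -lte_fin; exact: le_lt_trans (rdist_ge0 A B) rl.
case: (pselect (mink (1 + l) l A A b)) => // nS; exfalso.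
have Sa0 : mink (1 + l) l A A ((1 + l) *: a0 - l *: a0) by exists a0 => //; exists a0.
have [f [flin [fle [s0 Ss0 fs0]]]] := sep_pt (mink_cvx (l:=l) cA) nS Sa0.
have key1 : forall a1 a2, A a1 -> A a2 -> (1 + l) * f a1 - l * f a2 <= f b.
  move=> a1 a2 A1 A2.
  have := fle ((1 + l) *: a1 - l *: a2) (ex_intro2 _ _ a1 A1 (ex_intro2 _ _ a2 A2 erefl)).
  by rewrite linB // !linZ.
have key : forall a a1 a2, A a -> A a1 -> A a2 -> l * `|f a1 - f a2| <= f b - f a.
  move=> a a1 a2 A0 A1 A2.
  have k1 := key1 _ _ A0 A2; have k2 := key1 _ _ A1 A2.
  have k3 := key1 _ _ A0 A1; have k4 := key1 _ _ A2 A1.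
  case: (lerP (f a2) (f a1)) => h12.

    case: (lerP (f a) (f a1)) => h; nra.

  case: (lerP (f a) (f a2)) => h; nra.
have Dub : forall a, A a -> (rd_den f A <= ((f b - f a) / l)%:E)%E.
  move=> a Aa; apply: ge_ereal_sup => _ [a1 A1 [a2 A2 <-]].
  by rewrite lee_fin ler_pdivlMr // mulrC; exact: key.
have D0 : (0 <= rd_den f A)%E.
  apply: le_trans (ereal_sup_ubound _); last by exists a0 => //; exists a0.
  by rewrite lee_fin.
have [D' DE] : exists D', rd_den f A = D'%:E.
  by move: (Dub _ Aa0) D0; case: (rd_den f A) => [D'| |] // _ _; exists D'.
have D'0 : 0 <= D' by rewrite -lee_fin -DE.
have DleA : forall a, A a -> l * D' <= f b - f a.
  by move=> a Aa; have := Dub _ Aa; rewrite DE lee_fin ler_pdivlMr // mulrC.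
have NbE : forall x : R, (forall a, A a -> x <= `|f b - f a|) -> (x%:E <= rd_num f A B)%E.
  move=> x hx; apply: le_trans (ereal_sup_ubound _); last by exists b.
  by apply: le_ereal_inf_tmp => _ [a Aa <-]; rewrite lee_fin; exact: hx.
have fr : (l%:E <= rd_frac (rd_num f A B) (rd_den f A))%E.
  rewrite DE /rd_frac; case: ifP => [/eqP [] D'z|/negbT D'p].
    have fc : forall a, A a -> f a = f a0.
      move=> a Aa; have := @ereal_sup_ubound _ [set (`|f x - f x'|)%:E | x in A & x' in A] (`|f a - f a0|)%:E.
      rewrite -/(rd_den f A) DE D'z lee_fin => /(_ (ex_intro2 _ _ a Aa (ex_intro2 _ _ a0 Aa0 erefl))).
      by rewrite normr_le0 subr_eq0 => /eqP.
    move: Ss0 fs0 => [a1 A1 [a2 A2 <-]]; rewrite linB // !linZ // (fc _ A1) (fc _ A2).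
    move=> fb.
    have Npos : ((f b - f a0)%:E <= rd_num f A B)%E.
      by apply: NbE => a Aa; rewrite (fc _ Aa) ler_norm.
    case: ifP => [/eqP N0|_]; last exact: leey.
    have e : (1 + l) * f a0 - l * f a0 = f a0 by ring.
    by move: Npos; rewrite N0 lee_fin subr_le0 leNgt -{1}e fb.
  have D'p' : 0 < D' by rewrite lt_def D'0 andbT; apply: contraNneq D'p => ->.
  have Npos : ((l * D')%:E <= rd_num f A B)%E.
    by apply: NbE => a Aa; apply: le_trans (DleA _ Aa) (ler_norm _).
  apply: le_trans (lee_wpmul2r _ Npos); last by rewrite lee_fin invr_ge0 ltW.
  by rewrite -EFinM /= mulrK ?unitfE ?gt_eqF.
have : (rd_frac (rd_num f A B) (rd_den f A) <= rdist A B)%E.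
  rewrite rdistE; last by exists a0.
  by apply: ereal_sup_ubound; exists f.
move=> h; have := lt_le_trans rl (le_trans fr h); by rewrite ltxx.
Qed.

End S3.

Section S4.
Context {R : realType}.

Lemma rd_num_ext d (p q : 'rV[R]_d -> R^o) A B :
  (forall x y, `|p x - p y| = `|q x - q y|) -> rd_num p A B = rd_num q A B.
Proof.
move=> h; rewrite /rd_num; congr ereal_sup; congr image; apply: funext => b.
by congr ereal_inf; congr image; apply: funext => a; rewrite h.
Qed.

Lemma rd_den_ext d (p q : 'rV[R]_d -> R^o) A :
  (forall x y, `|p x - p y| = `|q x - q y|) -> rd_den p A = rd_den q A.
Proof.
move=> h; rewrite /rd_den; congr ereal_sup; congr image2; apply: funext => a.
by apply: funext => a'; rewrite h.
Qed.

Lemma rd_num_img d m (f : 'rV[R]_d -> 'rV[R]_m) (q : 'rV[R]_m -> R^o) A B :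
  rd_num q (f @` A) (f @` B) = rd_num (q \o f) A B.
Proof.
rewrite /rd_num image_comp; congr ereal_sup; congr image; apply: funext => b /=.
by rewrite image_comp.
Qed.

Lemma rd_den_img d m (f : 'rV[R]_d -> 'rV[R]_m) (q : 'rV[R]_m -> R^o) A :
  rd_den q (f @` A) = rd_den (q \o f) A.
Proof.
rewrite /rd_den; congr ereal_sup; apply/seteqP; split.
  by move=> _ [_ [a Aa <-] [_ [a' Aa' <-] <-]]; exists a => //; exists a'.
move=> _ [a Aa [a' Aa' <-]]; exists (f a); first by exists a.
by exists (f a'); first by exists a'.
Qed.

Lemma lmap0 (U V : lmodType R) (F : U -> V) : is_linear_map F -> F 0 = 0.
Proof.
move=> h; have := h 1 0 0; rewrite !scale1r addr0 => e.
by apply: (addIr (F 0)); rewrite add0r -e.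
Qed.

Lemma lmapB (U V : lmodType R) (F : U -> V) x y : is_linear_map F -> F (x - y) = F x - F y.
Proof.
move=> h; rewrite addrC -scaleN1r h scaleN1r addrC.
by [].
Qed.

Lemma rdist_affine_le d m (pi : 'rV[R]_d -> 'rV[R]_m) A B :
  is_affine_map pi -> (rdist (pi @` A) (pi @` B) <= rdist A B)%E.
Proof.
move=> [b0 hl].
case: (set0_or A) => [A0|[a Aa]].
  rewrite A0 image_set0 !rdist0E //; case: (set0_or B) => [B0|[b Bb]].
    by rewrite B0 image_set0 (asboolT (erefl (@set0 'rV[R]_m))) (asboolT (erefl (@set0 'rV[R]_d))).
  rewrite !asboolF ?leey //; first by move=> B0; rewrite B0 in Bb.
  move=> h; have hb : (pi @` B) (pi b) by exists b.
  by rewrite h in hb.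
rewrite rdistE; last by exists (pi a), a.
apply: ge_ereal_sup => _ [q /lin_isl ql <-].
rewrite rd_num_img rd_den_img.
pose g := fun x => q (pi x - b0) : R^o.
have gE : forall x y, `|(q \o pi) x - (q \o pi) y| = `|g x - g y|.
  move=> x y; rewrite /g /= -linB //; congr (`|_|).
  by rewrite -linB //; congr q; rewrite opprB addrA subrK.
rewrite (rd_num_ext _ _ gE) (rd_den_ext _ gE).
rewrite rdistE; last by exists a.
apply: ereal_sup_ubound; exists g => //.
by move=> c x y; rewrite /g hl ql.
Qed.

Lemma rdist_bij d (pi : 'rV[R]_d -> 'rV[R]_d) A B :
  is_affine_map pi -> bijective pi -> rdist (pi @` A) (pi @` B) = rdist A B.
Proof.
move=> ha [g pg gp]; apply/le_anti; rewrite rdist_affine_le //=.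
have ga : is_affine_map g.
  move: ha => [b0 hl]; exists (g 0).
  pose L := fun x => pi x - b0.
  have Linj : forall u v, L u = L v -> u = v.
    by move=> u v /addIr; exact: (can_inj pg).
  have LE : forall z, L (g z - g 0) = z.
    move=> z; have := lmapB (g z) (g 0) hl; rewrite /L /= => ->.
    by rewrite !gp opprB addrA subrK subr0.
  move=> c x y; apply: Linj; rewrite LE.
  have -> : L (c *: (g x - g 0) + (g y - g 0)) = c *: L (g x - g 0) + L (g y - g 0).
    exact: hl.
  by rewrite !LE.
have := rdist_affine_le (pi @` A) (pi @` B) ga; rewrite !image_comp.
have e : forall X, [set (g \o pi) x | x in X] = X.
  move=> X; apply/seteqP; split; first by move=> _ [x Xx <-]; rewrite /= pg.
  by move=> x Xx; exists x => //=; rewrite pg.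
by rewrite !e.
Qed.

Lemma part_i d (A B : set 'rV[R]_d) : cvx A -> A `<=` B ->
  rdist A B = ereal_inf [set l%:E | l in [set l : R | 0 <= l /\ B `<=` mink (1 + l) l A A]].
Proof.
move=> cA AB; case: (set0_or A) => [A0|[a0 Aa0]].
- rewrite rdist0E //; case: (set0_or B) => [B0|[b Bb]].
  + rewrite asboolT //; apply/le_anti/andP; split.
      by apply: le_ereal_inf_tmp => _ [l [l0 _] <-]; rewrite lee_fin.
    by apply: ereal_inf_lbound; exists 0 => //; split => //; rewrite B0; exact: sub0set.
  + rewrite asboolF; last by move=> h; rewrite h in Bb.
    have -> : [set l%:E | l in [set l : R | 0 <= l /\ B `<=` mink (1 + l) l A A]] = set0.
      apply/seteqP; split => // y [l [l0 h] _].
      by have [x Ax _] := h _ Bb; rewrite A0 in Ax.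
    by rewrite ereal_inf0.
- apply/le_anti/andP; split.
  + apply: le_ereal_inf_tmp => _ [l [l0 h] <-]; exact: rdist_le_easy Aa0 AB l0 h.
  + apply: (@my_le_approx R) => x hx; apply: ereal_inf_lbound; exists x => //; split.
    * by rewrite -lee_fin; apply: ltW; exact: le_lt_trans (rdist_ge0 A B) hx.
    * exact: rdist_hard Aa0 cA hx.
Qed.

End S4.

Section S5.
Context {R : realType}.

Lemma mink_comp d (A B C : set 'rV[R]_d) l1 l2 : cvx A -> 0 <= l1 -> 0 <= l2 ->
  B `<=` mink (1 + l1) l1 A A -> C `<=` mink (1 + l2) l2 B B ->
  C `<=` mink (1 + (l1 + l2 + 2 * l1 * l2)) (l1 + l2 + 2 * l1 * l2) A A.
Proof.
move=> /cvxP cA l10 l20 hB hC c Cc.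
have [b1 B1 [b2 B2 <-]] := hC _ Cc.
have [a11 A11 [a12 A12 <-]] := hB _ B1.
have [a21 A21 [a22 A22 <-]] := hB _ B2.
have [L0|Lp] := eqVneq (l1 + l2 + 2 * l1 * l2) 0.
  have l1z : l1 = 0 by nra.
  have l2z : l2 = 0 by nra.
  exists a11 => //; exists a12 => //; apply/rowP => i; rewrite !mxE l1z l2z; ring.
have L0 : 0 < l1 + l2 + 2 * l1 * l2 by rewrite lt_def Lp /=; nra.
pose al := (1 + l1) * (1 + l2) / (1 + (l1 + l2 + 2 * l1 * l2)).
pose be := (1 + l2) * l1 / (l1 + l2 + 2 * l1 * l2).
exists (al *: a11 + (1 - al) *: a22).
  apply: cA => //; first by rewrite /al divr_ge0 //; nra.
  by rewrite /al ler_pdivrMr ?mul1r; nra.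
exists (be *: a12 + (1 - be) *: a21).
  apply: cA => //; first by rewrite /be divr_ge0 //; nra.
  by rewrite /be ler_pdivrMr ?mul1r //; nra.
apply/rowP => i; rewrite !mxE /al /be; field.
by rewrite Lp /= gt_eqF //; nra.
Qed.

Lemma chull_sub d (X : set 'rV[R]_d) : X `<=` chull X.
Proof. by move=> x Xx K [_ XK]; exact: XK. Qed.

Lemma chull_min d (X K : set 'rV[R]_d) : cvx K -> X `<=` K -> chull X `<=` K.
Proof. by move=> cK XK x hx; exact: hx K (conj cK XK). Qed.

Lemma chull_cvx d (X : set 'rV[R]_d) : cvx (chull X).
Proof.
apply/cvxP => x y t t0 t1 hx hy K [cK XK]; have /cvxP cK' := cK.
by apply: cK' => //; [exact: hx K (conj cK XK) | exact: hy K (conj cK XK)].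
Qed.


Lemma arith_iii (y1 y2 x : R) : 0 <= y1 -> 0 <= y2 -> y1 + y2 + 2 * y1 * y2 < x ->
  exists dl, 0 < dl /\ (y1 + dl) + (y2 + dl) + 2 * (y1 + dl) * (y2 + dl) <= x.
Proof.
move=> y10 y20 hx.
pose e := x - (y1 + y2 + 2 * y1 * y2).
pose K := 4 + 2 * y1 + 2 * y2.
pose dl := e / (K + e).
have e0 : 0 < e by rewrite /e subr_gt0.
have K0 : 0 < K by rewrite /K; lra.
have dE : dl * (K + e) = e by rewrite /dl divfK // gt_eqF // addr_gt0.
have dl0 : 0 < dl by rewrite /dl divr_gt0 // addr_gt0.
have dl1 : dl < 1 by nra.
have dlK : dl * (4 + 2 * y1 + 2 * y2) <= e by rewrite -/K; nra.
have ex : x = e + (y1 + y2 + 2 * y1 * y2) by rewrite /e; ring.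
exists dl; split => //; rewrite ex; nra.
Qed.

Lemma part_iii d (A B C : set 'rV[R]_d) : cvx A -> cvx B -> A `<=` B -> B `<=` C ->
  (rdist A C <= rdist A B + rdist B C + 2%:E * rdist A B * rdist B C)%E.
Proof.
move=> cA cB AB BC.
apply: my_le_approx => x hx.
have g1 := rdist_ge0 A B; have g2 := rdist_ge0 B C.
have P0 : (0 <= 2%:E * rdist A B * rdist B C)%E by apply: mule_ge0 => //; apply: mule_ge0.
have h1 : (rdist A B < x%:E)%E.
  apply: le_lt_trans hx; apply: le_trans (leeDl _ P0); exact: leeDl.
have h2 : (rdist B C < x%:E)%E.
  apply: le_lt_trans hx; apply: le_trans (leeDl _ P0); exact: leeDr.
have [y1 e1] : exists y1, rdist A B = y1%:E.
  by move: g1 h1; case: (rdist A B) => [y| |] //; exists y.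
have [y2 e2] : exists y2, rdist B C = y2%:E.
  by move: g2 h2; case: (rdist B C) => [y| |] //; exists y.
have y10 : 0 <= y1 by rewrite -lee_fin -e1.
have y20 : 0 <= y2 by rewrite -lee_fin -e2.
move: hx; rewrite e1 e2 -!EFinM -!EFinD lte_fin => hx.
have [dl [dl0 hL]] := arith_iii y10 y20 hx.
have L0 : 0 <= (y1 + dl) + (y2 + dl) + 2 * (y1 + dl) * (y2 + dl).
  by clear -y10 y20 dl0; nra.
case: (set0_or A) => [A0|[a0 Aa0]].
  have B0 : B = set0.
    case: (set0_or B) => // [[b Bb]]; move: e1; rewrite rdist0E // asboolF //.
    by move=> B0; rewrite B0 in Bb.
  have C0 : C = set0.
    case: (set0_or C) => // [[c Cc]]; move: e2; rewrite rdist0E // asboolF //.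
    by move=> C0; rewrite C0 in Cc.
  rewrite rdist0E // C0 (asboolT (erefl (@set0 'rV[R]_d))) lee_fin.
  exact: le_trans L0 hL.
have r1 : (rdist A B < (y1 + dl)%:E)%E by rewrite e1 lte_fin ltrDl.
have r2 : (rdist B C < (y2 + dl)%:E)%E by rewrite e2 lte_fin ltrDl.
have hAB := rdist_hard Aa0 cA r1.
have hBC := rdist_hard (AB _ Aa0) cB r2.
have hAC := mink_comp cA (addr_ge0 y10 (ltW dl0)) (addr_ge0 y20 (ltW dl0)) hAB hBC.
apply: le_trans (rdist_le_easy Aa0 (fun z h => BC _ (AB _ h)) L0 hAC) _.
by rewrite lee_fin.
Qed.


Lemma part_iv d t (As Bs : 'I_t -> set 'rV[R]_d) :
  (0 < t)%N -> (forall i, cvx (As i)) -> (forall i, cvx (Bs i)) ->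
  (forall i, As i `<=` Bs i) ->
  (rdist (chull (\bigcup_(i in [set: 'I_t]) As i))
         (chull (\bigcup_(i in [set: 'I_t]) Bs i))
   <= \big[maxe/-oo%E]_(i < t) rdist (As i) (Bs i))%E.
Proof.
move=> tp cAs cBs AsBs.
set A := chull (\bigcup_(i in _) As i); set B := chull (\bigcup_(i in _) Bs i).
set M := \big[maxe/-oo%E]_(i < t) _.
have Mi : forall i, (rdist (As i) (Bs i) <= M)%E by move=> i; exact: le_bigmax.
apply: my_le_approx => x Mx.
have rx : forall i, (rdist (As i) (Bs i) < x%:E)%E.
  by move=> i; exact: le_lt_trans (Mi i) Mx.
have x0 : 0 <= x.
  by rewrite -lee_fin; exact: ltW (le_lt_trans (rdist_ge0 _ _) (rx (Ordinal tp))).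
have cA : cvx A by exact: chull_cvx.
have hB : B `<=` mink (1 + x) x A A.
  apply: chull_min; first exact: mink_cvx.
  move=> b [i _ Bib].
  case: (set0_or (As i)) => [Ai0|[a Aa]].
    have := rx i; rewrite rdist0E // asboolF; first by rewrite ltNge leey.
    by move=> h; rewrite h in Bib.
  have [a1 A1 [a2 A2 <-]] := rdist_hard Aa (cAs i) (rx i) Bib.
  exists a1; first by apply: chull_sub; exists i.
  by exists a2 => //; apply: chull_sub; exists i.
have AB : A `<=` B.
  apply: chull_min; first exact: chull_cvx.
  by move=> z [i _ Aiz]; apply: chull_sub; exists i => //; exact: AsBs.
case: (set0_or A) => [A0|[a0 Aa0]].
  have B0 : B = set0.
    by apply/seteqP; split => // b /hB [a1 A1 _]; rewrite A0 in A1.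
  by rewrite rdist0E // B0 (asboolT (erefl (@set0 'rV[R]_d))) lee_fin.
exact: rdist_le_easy Aa0 AB x0 hB.
Qed.

End S5.

Unset Implicit Arguments. Set Strict Implicit.

Theorem mainTheorem4 (R : realType) (d : nat) (A B C : set 'rV[R]_d) :
  cvx A -> cvx B -> cvx C -> A `<=` B -> B `<=` C ->
  (* (i) *)
  rdist A B = ereal_inf [set l%:E | l in [set l : R | 0 <= l /\ B `<=` mink (1 + l) l A A]]
  (* (ii) *)
  /\ (forall (m : nat) (pi : 'rV[R]_d -> 'rV[R]_m), is_affine_map pi ->
        (rdist (pi @` A) (pi @` B) <= rdist A B)%E)
  /\ (forall pi : 'rV[R]_d -> 'rV[R]_d, is_affine_map pi -> bijective pi ->
        rdist (pi @` A) (pi @` B) = rdist A B)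
  (* (iii) *)
  /\ (rdist A C <= rdist A B + rdist B C + 2%:E * rdist A B * rdist B C)%E
  (* (iv) *)
  /\ (forall (t : nat) (As Bs : 'I_t -> set 'rV[R]_d),
        (0 < t)%N ->
        (forall i, cvx (As i)) -> (forall i, cvx (Bs i)) ->
        (forall i, As i `<=` Bs i) ->
        (rdist (chull (\bigcup_(i in [set: 'I_t]) As i))
               (chull (\bigcup_(i in [set: 'I_t]) Bs i))
         <= \big[maxe/-oo%E]_(i < t) rdist (As i) (Bs i))%E).
Proof.
move=> cA cB cC AB BC; split; first exact: part_i.
split; first by move=> m pi hpi; exact: rdist_affine_le.
split; first by move=> pi hpi hb; exact: rdist_bij.
split; first exact: part_iii.
by move=> t As Bs; exact: part_iv.
Qed.
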